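(* Let $(X,T)$ be a minimal topological dynamical system. Then $(X,T)$ is strongly $\mathcal{F}_{ip}$-sensitive if and only if there is $\delta>0$ such that for every non-empty open subset $U$ of $X$ there are $x\in U$ and $y\in X$ with $d(x,y)>\delta$ and $x$ strongly proximal to $y$.
   Context: A topological dynamical system: compact metric space $(X,d)$ with continuous surjection $T$; minimal means every orbit is dense. $x$ is strongly proximal to $y$ if $(y,y)$ belongs to the $\omega$-limit set of $(x,y)$ under $T\times T$, i.e. there are $n_k\to\infty$ with $T^{n_k}x\to y$ and $T^{n_k}y\to y$. $\mathcal{F}_{ip}$ is the family of subsets of $\mathbb{Z}_+$ containing some $FS((p_i)_{i=1}^\infty)=\{\sum_{i\in\alpha}p_i:\alpha$ finite nonempty$\}$, $p_i\in\mathbb{N}$. $(X,T)$ is strongly $\mathcal{F}_{ip}$-sensitive if there is $\delta>0$ such that for each nonempty open $U$ there are $x,y\in U$ with $\{n\in\mathbb{Z}_+:d(T^nx,T^ny)>\delta\}\in\mathcal{F}_{ip}$. *)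

(* Defs.v *)
From Stdlib Require Import Reals List.
Open Scope R_scope.
Set Implicit Arguments.

Section Dyn.
Variable X : Type.
Variable d : X -> X -> R.

Definition is_metric : Prop :=
  (forall x y, d x y = 0 <-> x = y) /\
  (forall x y, d x y = d y x) /\
  (forall x y z, d x z <= d x y + d y z).

Definition d_open (U : X -> Prop) : Prop :=
  forall x, U x -> exists e, 0 < e /\ forall y, d x y < e -> U y.

Definition d_compact : Prop :=
  forall (I : Type) (F : I -> X -> Prop),
    (forall i, d_open (F i)) -> (forall x, exists i, F i x) ->
    exists l : list I, forall x, exists i, In i l /\ F i x.

Definition d_continuous (T : X -> X) : Prop :=
  forall x e, 0 < e -> exists del, 0 < del /\
    forall y, d x y < del -> d (T x) (T y) < e.

Definition surjective (T : X -> X) : Prop := forall y, exists x, T x = y.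

Definition iterT (T : X -> X) (n : nat) (x : X) : X := Nat.iter n T x.

Definition d_dense (A : X -> Prop) : Prop :=
  forall U, d_open U -> (exists u, U u) -> exists a, A a /\ U a.

Definition minimal (T : X -> X) : Prop :=
  forall x, d_dense (fun z => exists n, z = iterT T n x).

Definition TDS (T : X -> X) : Prop :=
  is_metric /\ d_compact /\ d_continuous T /\ surjective T.

Definition seq_converges (u : nat -> X) (l : X) : Prop :=
  forall e, 0 < e -> exists k0, forall k, (k0 <= k)%nat -> d (u k) l < e.

Definition strongly_proximal (T : X -> X) (x y : X) : Prop :=
  exists nk : nat -> nat,
    (forall K, exists k0, forall k, (k0 <= k)%nat -> (K <= nk k)%nat) /\
    seq_converges (fun k => iterT T (nk k) x) y /\
    seq_converges (fun k => iterT T (nk k) y) y.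


End Dyn.

(* finite sums FS((p_i)) : sums over finite nonempty index sets alpha,
   represented as duplicate-free nonempty lists *)
Definition FS (p : nat -> nat) (n : nat) : Prop :=
  exists alpha : list nat, alpha <> nil /\ NoDup alpha /\
    n = fold_right (fun i s => (p i + s)%nat) 0%nat alpha.

Definition F_ip (A : nat -> Prop) : Prop :=
  exists p : nat -> nat, (forall i, (1 <= p i)%nat) /\
    forall n, FS p n -> A n.

Definition strongly_Fip_sensitive (X : Type) (d : X -> X -> R) (T : X -> X) : Prop :=
  exists delta, 0 < delta /\
    forall U : X -> Prop, d_open d U -> (exists u, U u) ->
      exists x y, U x /\ U y /\
        F_ip (fun n => d (iterT T n x) (iterT T n y) > delta).

(* Main.v *)
Require Import Defs.
From Stdlib Require Import List.
From Stdlib Require Import Reals Lra.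
From mathcomp Require classical_sets.
From Stdlib Require Import Classical FunctionalExtensionality PropExtensionality
  IndefiniteDescription ClassicalDescription List Arith Lia.
Import ListNotations.
Open Scope nat_scope.

Lemma my_zorn (T:Type) (P : (T->Prop)->Prop) :
  (forall Fam : (T -> Prop) -> Prop, (forall G, Fam G -> P G) ->
     (forall G1 G2, Fam G1 -> Fam G2 -> (forall a, G1 a -> G2 a) \/ (forall a, G2 a -> G1 a)) ->
     P (fun a => exists2 G, Fam G & G a)) ->
  exists G, P G /\ forall B, (forall a, G a -> B a) -> P B -> forall a, B a -> G a.
Proof.
intros H.
destruct (@classical_sets.Zorn_bigcup T P) as [A [PA HA]].
- intros F FP Ftot.
  specialize (H F FP Ftot).
  unfold classical_sets.bigcup, classical_sets.mkset. simpl.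
  exact H.
- exists A; split; [exact PA|].
  intros B AB PB a Ba.
  apply NNPP; intro nA.
  apply (HA B); [|exact PB].
  split; [exact AB|].
  intro BA. apply nA. apply BA. exact Ba.
Qed.

Definition sset := nat -> Prop.
Definition uf := sset -> Prop.
Record is_uf (p : uf) : Prop := {
  uf_top : p (fun _ => True);
  uf_ne : forall A, p A -> exists n, A n;
  uf_int : forall A B, p A -> p B -> p (fun n => A n /\ B n);
  uf_mono : forall A B, (forall n, A n -> B n) -> p A -> p B;
  uf_ult : forall A, p A \/ p (fun n => ~ A n) }.
Definition star (p q : uf) : uf := fun A => p (fun n => q (fun m => A (n + m))).
Definition nonpr (p:uf) := forall k, p (fun n => k <= n).
Definition hull (F : sset -> Prop) (p : uf) := is_uf p /\ forall A, F A -> p A.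

Lemma uf_all p : is_uf p -> forall A, (forall n, A n) -> p A.
Proof. intros Hp A HA. apply (uf_mono _ Hp (fun _ => True)); auto. apply uf_top; auto. Qed.

Lemma uf_ext p q : is_uf p -> is_uf q -> (forall A, p A -> q A) -> p = q.
Proof.
intros Hp Hq H. extensionality A. apply propositional_extensionality. split; [apply H|].
intro qA. destruct (uf_ult _ Hp A) as [h|h]; [exact h|].
apply H in h. destruct (uf_ne _ Hq _ (uf_int _ Hq _ _ qA h)) as [n [h1 h2]]. contradiction.
Qed.

Lemma star_uf p q : is_uf p -> is_uf q -> is_uf (star p q).
Proof.
intros Hp Hq. unfold star. constructor.
- apply uf_all; auto. intros n. apply uf_top; auto.
- intros A HA. destruct (uf_ne _ Hp _ HA) as [n Hn]. destruct (uf_ne _ Hq _ Hn) as [m Hm]. eauto.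
- intros A B HA HB. eapply (uf_mono _ Hp); [|apply (uf_int _ Hp _ _ HA HB)].
  intros n [h1 h2]. apply (uf_int _ Hq _ _ h1 h2).
- intros A B hAB. apply (uf_mono _ Hp). intros n. apply (uf_mono _ Hq). intros m. apply hAB.
- intros A. destruct (uf_ult _ Hp (fun n => q (fun m => A (n + m)))) as [h|h]; [left; exact h|right].
  refine (uf_mono _ Hp _ _ _ h). intros n hn. simpl in hn.
  destruct (uf_ult _ Hq (fun m => A (n + m))) as [h'|h']; [contradiction|exact h'].
Qed.

Lemma star_assoc p q r : star (star p q) r = star p (star q r).
Proof.
unfold star. extensionality A. f_equal. extensionality a. f_equal. extensionality b.
f_equal. extensionality c. rewrite Nat.add_assoc. reflexivity.
Qed.

Lemma nonpr_star p q : is_uf p -> is_uf q -> nonpr q -> nonpr (star p q).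
Proof.
intros Hp Hq Hn k. unfold star. apply uf_all; auto. intro n.
apply (uf_mono _ Hq _ _ (fun m (h : k <= m) => (ltac:(lia) : k <= n + m))). apply Hn.
Qed.

Lemma uf_list p : is_uf p -> forall L : list sset, (forall B, In B L -> p B) ->
  p (fun n => forall B, In B L -> B n).
Proof.
intros Hp L. induction L as [|A L IH]; intro H.
- apply uf_all; auto. intros n B [].
- apply (uf_mono _ Hp (fun n => A n /\ forall B, In B L -> B n)).
  + intros n [h1 h2] B [<-|hB]; [exact h1|exact (h2 B hB)].
  + apply (uf_int _ Hp). apply H; simpl; auto. apply IH. intros; apply H; simpl; auto.
Qed.

Definition FIP (G : sset -> Prop) := forall L : list sset, (forall B, In B L -> G B) ->
  exists n, forall B, In B L -> B n.

Lemma drop_one (G : sset -> Prop) (A : sset) (L : list sset) :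
  (forall B, In B L -> G B \/ B = A) ->
  exists L', (forall B, In B L' -> G B) /\ forall n, A n -> (forall B, In B L' -> B n) -> forall B, In B L -> B n.
Proof.
induction L as [|C L IH]; intro H.
- exists []; split; [intros _ []|intros n _ _ B []].
- destruct IH as [L' [h1 h2]]. { intros; apply H; simpl; auto. }
  destruct (H C (or_introl eq_refl)) as [hC|hC].
  + exists (C :: L'). split. { intros B [<-|hB]; auto. }
    intros n hA hL B [<-|hB]. apply hL; simpl; auto. apply h2; auto. intros; apply hL; simpl; auto.
  + exists L'. split; auto. intros n hA hL B [<-|hB]. subst; auto. apply h2; auto.
Qed.

Lemma uf_exists G : FIP G -> exists p, is_uf p /\ forall A, G A -> p A.
Proof.
intro HG.
destruct (my_zorn sset (fun H => FIP (fun B => G B \/ H B))) as [M [PM HM]].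
- intros Fam FP Ftot L HL.
  assert (Hc : (forall B, In B L -> G B) \/ exists2 H, Fam H & forall B, In B L -> G B \/ H B).
  { clear HG. induction L as [|C L IH].
    - left. intros _ [].
    - destruct IH as [IH|[H fH IH]]. { intros; apply HL; simpl; auto. }
      + destruct (HL C (or_introl eq_refl)) as [hC|[H fH hH]].
        * left. intros B [<-|hB]; auto.
        * right. exists H; auto. intros B [<-|hB]; auto.
      + destruct (HL C (or_introl eq_refl)) as [hC|[H' fH' hH']].
        * right. exists H; auto. intros B [<-|hB]; auto.
        * destruct (Ftot H H' fH fH') as [s|s].
          -- right. exists H'; auto. intros B [<-|hB]; auto. destruct (IH B hB); auto.
          -- right. exists H; auto. intros B [<-|hB]; auto. }
  destruct Hc as [Hc|[H fH Hc]].
  + apply HG; auto.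
  + apply (FP H fH). auto.
- set (q := fun A => exists L, (forall B, In B L -> G B \/ M B) /\ forall n, (forall B, In B L -> B n) -> A n).
  assert (Hadd : forall A, (forall L, (forall B, In B L -> G B \/ M B) -> exists n, A n /\ forall B, In B L -> B n) -> M A).
  { intros A HA. apply (HM (fun B => M B \/ B = A)); [auto| |right; auto].
    intros L HL. destruct (drop_one (fun B => G B \/ M B) A L) as [L' [h1 h2]].
    { intros B hB. destruct (HL B hB) as [?|[?|?]]; auto. }
    destruct (HA L' h1) as [n [hn1 hn2]]. exists n. exact (h2 n hn1 hn2). }
  exists q. split.
  + constructor.
    * exists []. split; [intros _ []|auto].
    * intros A [L [h1 h2]]. destruct (PM L h1) as [n hn]. eauto.
    * intros A B [L1 [h1 h2]] [L2 [h3 h4]]. exists (L1 ++ L2). split.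
      { intros C hC. apply in_app_or in hC. destruct hC; auto. }
      intros n hn. split; [apply h2|apply h4]; intros; apply hn; apply in_or_app; auto.
    * intros A B hAB [L [h1 h2]]. exists L; split; auto.
    * intro A. destruct (classic (forall L, (forall B, In B L -> G B \/ M B) -> exists n, A n /\ forall B, In B L -> B n)) as [c|c].
      { left. exists [A]. split. intros B [<-|[]]. right; apply Hadd; auto. intros n hn; apply hn; simpl; auto. }
      right. exists [fun n => ~ A n]. split; [|intros n hn; apply hn; simpl; auto].
      intros B [<-|[]]. right. apply Hadd. intros L2 hL2.
      apply not_all_ex_not in c. destruct c as [L1 c].
      apply imply_to_and in c. destruct c as [hL1 c].
      destruct (PM (L1 ++ L2)) as [n hn].
      { intros C hC. apply in_app_or in hC. destruct hC; auto. }
      exists n. split.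
      -- intro hA. apply c. exists n. split; auto. intros; apply hn; apply in_or_app; auto.
      -- intros; apply hn; apply in_or_app; auto.
  + intros A hA. exists [A]. split. intros B [<-|[]]. auto. intros n hn; apply hn; simpl; auto.
Qed.
Definition semi (F : sset -> Prop) := forall p q, hull F p -> hull F q -> hull F (star p q).
Definition cup (G F0 : sset -> Prop) := fun A => G A \/ F0 A.

Lemma hull_mono F1 F2 p : (forall A, F1 A -> F2 A) -> hull F2 p -> hull F1 p.
Proof. intros h [h1 h2]; split; auto. Qed.

Lemma ellis F0 : (exists p, hull F0 p) -> semi F0 -> exists u, hull F0 u /\ star u u = u.
Proof.
intros [p0 Hp0] Hs0.
destruct (my_zorn sset (fun G => (exists p, hull (cup G F0) p) /\ semi (cup G F0))) as [G [[Hne Hsemi] HG]].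
- intros Fam FP Ftot. set (U := fun a => exists2 H, Fam H & H a). split.
  + apply uf_exists. intros L HL.
    assert (Hc : (forall B, In B L -> F0 B) \/ exists2 H, Fam H & forall B, In B L -> cup H F0 B).
    { induction L as [|C L IH].
      - left. intros _ [].
      - destruct IH as [IH|[H fH IH]]. { intros; apply HL; simpl; auto. }
        + destruct (HL C (or_introl eq_refl)) as [[H fH hH]|hC].
          * right. exists H; auto. intros B [<-|hB]; [left; auto|right; auto].
          * left. intros B [<-|hB]; auto.
        + destruct (HL C (or_introl eq_refl)) as [[H' fH' hH']|hC].
          * destruct (Ftot H H' fH fH') as [s|s].
            -- right. exists H'; auto. intros B [<-|hB]; [left; auto|]. destruct (IH B hB); [left; auto|right; auto].
            -- right. exists H; auto. intros B [<-|hB]; [left; auto|auto].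
          * right. exists H; auto. intros B [<-|hB]; [right; auto|auto]. }
    destruct Hc as [Hc|[H fH Hc]].
    * destruct Hp0 as [u1 u2]. apply (uf_ne _ u1). apply uf_list; auto.
    * destruct (proj1 (FP H fH)) as [p [p1 p2]]. apply (uf_ne _ p1). apply uf_list; auto.
  + intros p q Hp Hq. split. { apply star_uf; [apply Hp|apply Hq]. }
    intros A [[H fH hA]|hA].
    * assert (e : forall r, hull (cup U F0) r -> hull (cup H F0) r).
      { intros r; apply hull_mono. intros B [hB|hB]; [left; exists H; auto|right; auto]. }
      apply (proj2 (FP H fH) p q (e _ Hp) (e _ Hq)). left; auto.
    * assert (e : forall r, hull (cup U F0) r -> hull F0 r).
      { intros r; apply hull_mono. intros B hB; right; auto. }
      apply (Hs0 p q (e _ Hp) (e _ Hq)). auto.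
- destruct Hne as [e He].
  set (C := hull (cup G F0)).
  assert (CF0 : forall r, C r -> hull F0 r). { intros r; apply hull_mono. intros B hB; right; auto. }
  assert (Cuf : forall r, C r -> is_uf r). { intros r [h _]; exact h. }
  assert (eu : is_uf e) by (apply Cuf; exact He).
  set (G1 := fun A => forall t, C t -> star t e A).
  assert (GG1 : forall A, G A -> G1 A).
  { intros A hA t Ct. apply (proj2 (Hsemi t e Ct He)). left; auto. }
  assert (K1 : forall p, hull (cup G1 F0) p -> exists t, C t /\ p = star t e).
  { intros p Hp. assert (pu : is_uf p) by apply Hp.
    set (H := fun B => cup G F0 B \/ exists A, p A /\ B = (fun n => e (fun m => A (n + m)))).
    destruct (uf_exists H) as [t [tu tH]].
    - intros L HL.
      assert (HA : exists As, p As /\ forall B, In B L -> cup G F0 B \/ forall n, e (fun m => As (n + m)) -> B n).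
      { induction L as [|B0 L IH].
        - exists (fun _ => True). split. apply uf_top, pu. intros _ [].
        - destruct IH as [As [h1 h2]]. { intros; apply HL; simpl; auto. }
          destruct (HL B0 (or_introl eq_refl)) as [hB|[A [hA ->]]].
          + exists As. split; auto. intros B [<-|hB']; auto.
          + exists (fun n => As n /\ A n). split. apply uf_int; auto.
            intros B [<-|hB'].
            * right. intros n hn. refine (uf_mono _ eu _ _ _ hn). intros m [_ h]; exact h.
            * destruct (h2 B hB') as [h|h]; [left; auto|right].
              intros n hn. apply h. refine (uf_mono _ eu _ _ _ hn). intros m [h' _]; exact h'. }
      destruct HA as [As [h1 h2]].
      assert (Ht : exists t, C t /\ t (fun n => e (fun m => As (n + m)))).
      { apply NNPP. intro nt.
        assert (g1 : G1 (fun n => ~ As n)).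
        { intros t Ct. unfold star.
          destruct (uf_ult _ (Cuf t Ct) (fun n => e (fun m => As (n + m)))) as [h|h].
          - exfalso. apply nt. exists t; auto.
          - refine (uf_mono _ (Cuf t Ct) _ _ _ h). intros n hn.
            destruct (uf_ult _ eu (fun m => As (n + m))) as [h'|h']; [contradiction|exact h']. }
        assert (pn : p (fun n => ~ As n)) by (apply (proj2 Hp); left; exact g1).
        destruct (uf_ne _ pu _ (uf_int _ pu _ _ h1 pn)) as [n [a b]]. contradiction. }
      destruct Ht as [t [Ct ht]].
      apply (uf_ne _ (Cuf t Ct)). apply uf_list; auto.
      intros B hB. destruct (h2 B hB) as [h|h].
      + apply (proj2 Ct). exact h.
      + refine (uf_mono _ (Cuf t Ct) _ _ _ ht). exact h.
    - exists t. split.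
      + split; auto. intros A hA. apply tH. left; auto.
      + apply uf_ext; [exact pu|apply star_uf; auto|].
        intros A hA. apply tH. right. exists A. split; auto. }
  assert (CC : forall r s, C r -> C s -> C (star r s)) by exact Hsemi.
  assert (P1 : (exists p, hull (cup G1 F0) p) /\ semi (cup G1 F0)).
  { split.
    - exists (star e e). split. apply star_uf; auto.
      intros A [hA|hA]. apply hA; exact He. apply (proj2 (CC e e He He)). right; auto.
    - intros p q Hp Hq.
      destruct (K1 p Hp) as [t [Ct ->]]. destruct (K1 q Hq) as [s [Cs ->]].
      rewrite <- star_assoc.
      split. apply star_uf; [apply star_uf|]; auto.
      intros A [hA|hA].
      + apply hA. apply CC; [|exact Cs]. apply CC; auto.
      + apply (proj2 (CC _ _ (CC _ _ (CC _ _ Ct He) Cs) He)). right; auto. }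
  assert (G1G : forall A, G1 A -> G A) by (apply (HG G1 GG1 P1)).
  destruct (K1 e) as [t0 [Ct0 Et0]].
  { split; auto. intros A [hA|hA]; apply (proj2 He); [left; apply G1G|right]; auto. }
  set (G2 := fun A => forall t, C t -> star t e = e -> t A).
  assert (GG2 : forall A, G A -> G2 A).
  { intros A hA t Ct _. apply (proj2 Ct). left; auto. }
  assert (K2 : forall p, hull (cup G2 F0) p -> C p /\ star p e = e).
  { intros p Hp. assert (pu : is_uf p) by apply Hp.
    assert (Cp : C p).
    { split; auto. intros A [hA|hA]; apply (proj2 Hp); [left; apply GG2|right]; auto. }
    split; auto.
    symmetry. apply uf_ext; [exact eu|apply star_uf; auto|].
    intros A hA. apply (proj2 Hp). left. intros t Ct Et.
    change (star t e A). rewrite Et. exact hA. }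
  assert (P2 : (exists p, hull (cup G2 F0) p) /\ semi (cup G2 F0)).
  { split.
    - exists t0. split. apply Cuf; auto.
      intros A [hA|hA]. apply hA; auto. apply (proj2 Ct0). right; auto.
    - intros p q Hp Hq.
      destruct (K2 p Hp) as [Cp Ep]. destruct (K2 q Hq) as [Cq Eq].
      assert (E : star (star p q) e = e) by (rewrite star_assoc, Eq; exact Ep).
      split. apply Cuf, CC; auto.
      intros A [hA|hA].
      + apply hA; auto.
      + apply (proj2 (CC _ _ Cp Cq)). right; auto. }
  assert (G2G : forall A, G2 A -> G A) by (apply (HG G2 GG2 P2)).
  destruct (K2 e) as [_ Ee].
  { split; auto. intros A [hA|hA]; apply (proj2 He); [left; apply G2G|right]; auto. }
  exists e. split; auto.
Qed.
Definition fsum (f : nat -> nat) (alpha : list nat) : nat :=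
  fold_right (fun i s => (f i + s)%nat) 0%nat alpha.

Lemma NoDup_remove' a l : NoDup l -> NoDup (remove Nat.eq_dec a l).
Proof.
induction 1 as [|x l hx hl IH]; simpl. constructor.
destruct (Nat.eq_dec a x); auto. constructor; auto.
intro h. apply in_remove in h. tauto.
Qed.

Lemma fsum_remove f a alpha : In a alpha -> NoDup alpha ->
  fsum f alpha = f a + fsum f (remove Nat.eq_dec a alpha).
Proof.
induction alpha as [|b l IH]; simpl; intros hIn hN. destruct hIn.
inversion hN as [|? ? hb hl]; subst.
destruct (Nat.eq_dec a b) as [->|hab].
- rewrite notin_remove; auto.
- destruct hIn as [->|hIn]; [congruence|]. simpl. rewrite (IH hIn hl). lia.
Qed.

Definition igood (B : sset) (L : list nat) (n : nat) :=
  1 <= n /\ B n /\ forall s, In s L -> B (s + n).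

Definition ipick (B : sset) (L : list nat) : nat :=
  match excluded_middle_informative (exists n, igood B L n) with
  | left h => proj1_sig (constructive_indefinite_description _ h)
  | right _ => 0 end.

Lemma ipick_good B L : (exists n, igood B L n) -> igood B L (ipick B L).
Proof.
intro h. unfold ipick. destruct (excluded_middle_informative _) as [h'|h']; [|contradiction].
exact (proj2_sig (constructive_indefinite_description _ h')).
Qed.

Fixpoint Ls (B : sset) (k : nat) : list nat :=
  match k with
  | 0 => [0]
  | S k => Ls B k ++ map (fun s => s + ipick B (Ls B k)) (Ls B k)
  end.

Lemma gen_ip u B : is_uf u -> nonpr u -> u B -> (forall n, B n -> u (fun m => B (n + m))) ->
  exists p : nat -> nat, (forall i, 1 <= p i) /\
    forall alpha, alpha <> nil -> NoDup alpha -> B (fsum p alpha).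
Proof.
intros uu nu uB hB.
assert (Hg : forall L, (forall s, In s L -> s = 0 \/ B s) -> igood B L (ipick B L)).
{ intros L hL. apply ipick_good.
  assert (h1 : u (fun n => forall s, In s L -> B (s + n))).
  { induction L as [|s L IH].
    - apply uf_all; auto. intros n s [].
    - assert (hs : u (fun n => B (s + n))).
      { destruct (hL s (or_introl eq_refl)) as [->|h]. exact uB. apply hB; exact h. }
      refine (uf_mono _ uu _ _ _ (uf_int _ uu _ _ (IH _) hs)).
      + intros n [h1 h2] s' [<-|h']; auto.
      + intros; apply hL; simpl; auto. }
  assert (h2 : u (fun n => (1 <= n /\ B n) /\ forall s, In s L -> B (s + n))).
  { apply uf_int; auto. apply uf_int; auto. }
  destruct (uf_ne _ uu _ h2) as [n [[a b] c]]. exists n. split; auto. }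
set (p := fun k => ipick B (Ls B k)).
assert (Inv : forall k s, In s (Ls B k) -> s = 0 \/ B s).
{ induction k as [|k IH]; simpl; intros s hs.
  - destruct hs as [<-|[]]; auto.
  - apply in_app_or in hs. destruct hs as [hs|hs]; auto.
    apply in_map_iff in hs. destruct hs as [s' [<- hs']].
    right. apply (Hg _ IH). exact hs'. }
assert (Sum : forall k alpha, NoDup alpha -> (forall i, In i alpha -> i < k) -> In (fsum p alpha) (Ls B k)).
{ induction k as [|k IH]; intros alpha hN hlt.
  - destruct alpha as [|a al]. simpl; auto. specialize (hlt a (or_introl eq_refl)). lia.
  - simpl. apply in_or_app. destruct (in_dec Nat.eq_dec k alpha) as [hk|hk].
    + right. rewrite (fsum_remove p k alpha hk hN). apply in_map_iff.
      exists (fsum p (remove Nat.eq_dec k alpha)). split. unfold p; lia.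
      apply IH. apply NoDup_remove'; auto.
      intros i hi. apply in_remove in hi. destruct hi as [h1 h2]. specialize (hlt i h1). lia.
    + left. apply IH; auto. intros i hi. specialize (hlt i hi). assert (i <> k) by (intro; subst; contradiction). lia. }
exists p. split.
- intro i. apply (Hg _ (Inv i)).
- intros alpha hne hN.
  assert (hpos : 1 <= fsum p alpha).
  { destruct alpha as [|a al]; [congruence|]. simpl. pose proof (proj1 (Hg _ (Inv a))). unfold p. lia. }
  destruct (Inv (S (list_max alpha)) (fsum p alpha)) as [h|h]; [|lia|exact h].
  apply Sum; auto. intros i hi.
  assert (i <= list_max alpha). { pose proof (proj1 (list_max_le alpha (list_max alpha)) (le_n _)) as hF. rewrite Forall_forall in hF. auto. }
  lia.
Qed.
Lemma ip_of_idem u A : is_uf u -> nonpr u -> star u u = u -> u A -> F_ip A.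
Proof.
intros uu nu Hid uA.
set (B := fun n => A n /\ u (fun m => A (n + m))).
assert (uB : u B).
{ apply uf_int; auto. change (star u u A). rewrite Hid. exact uA. }
assert (hB : forall n, B n -> u (fun m => B (n + m))).
{ intros n [hn1 hn2]. apply uf_int; auto.
  assert (E : star u u (fun j => A (n + j)) = u (fun m => u (fun m0 => A (n + m + m0)))).
  { unfold star. f_equal. extensionality m. f_equal. extensionality k. rewrite Nat.add_assoc. reflexivity. }
  rewrite <- E, Hid. exact hn2. }
destruct (gen_ip u B uu nu uB hB) as [p [hp1 hp2]].
exists p. split; auto. intros n [alpha [h1 [h2 ->]]]. apply (hp2 alpha h1 h2).
Qed.

Open Scope R_scope.

Lemma d_self X (d : X -> X -> R) x : is_metric d -> d x x = 0.
Proof. intros [h _]. apply h; auto. Qed.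

Lemma d_sym X (d : X -> X -> R) x y : is_metric d -> d x y = d y x.
Proof. intros [_ [h _]]. apply h. Qed.

Lemma d_tri X (d : X -> X -> R) x y z : is_metric d -> d x z <= d x y + d y z.
Proof. intros [_ [_ h]]. apply h. Qed.

Lemma d_nonneg X (d : X -> X -> R) x y : is_metric d -> 0 <= d x y.
Proof.
intros hm. pose proof (d_tri X d x y x hm). rewrite (d_self X d x hm) in H.
rewrite (d_sym X d y x hm) in H. lra.
Qed.

Lemma ball_open X (d : X -> X -> R) c r : is_metric d -> d_open d (fun y => d c y < r).
Proof.
intros hm x hx. exists (r - d c x). split. lra.
intros y hy. pose proof (d_tri X d c x y hm). lra.
Qed.

Lemma iterT_S X (T : X -> X) n x : iterT T (S n) x = T (iterT T n x).
Proof. reflexivity. Qed.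

Lemma iterT_add X (T : X -> X) n m x : iterT T (n + m) x = iterT T n (iterT T m x).
Proof. unfold iterT. apply Nat.iter_add. Qed.

Lemma iter_cont X (d : X -> X -> R) T : d_continuous d T -> forall n, d_continuous d (iterT T n).
Proof.
intros hT n. induction n as [|n IH]; intros x e he.
- exists e. split; auto.
- destruct (hT (iterT T n x) e he) as [e1 [he1 h1]].
  destruct (IH x e1 he1) as [e2 [he2 h2]].
  exists e2. split; auto. intros y hy. rewrite !iterT_S. apply h1. apply h2. exact hy.
Qed.

Definition Lim X (d : X -> X -> R) (T : X -> X) (p : uf) (x z : X) : Prop :=
  forall e, 0 < e -> p (fun n => d (iterT T n x) z < e).

Lemma lim_exists X (d : X -> X -> R) T p x : is_metric d -> d_compact d -> is_uf p ->
  exists z, Lim X d T p x z.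
Proof.
intros hm hc hp. apply NNPP. intro hn.
set (I := {ze : X * R | 0 < snd ze /\ ~ p (fun n => d (iterT T n x) (fst ze) < snd ze)}).
set (F := fun (i : I) y => d (fst (proj1_sig i)) y < snd (proj1_sig i)).
destruct (hc I F) as [l hl].
- intros i. apply ball_open; auto.
- intros y. assert (hy : ~ Lim X d T p x y) by (intro h; apply hn; exists y; exact h).
  unfold Lim in hy. apply not_all_ex_not in hy. destruct hy as [e hy].
  apply imply_to_and in hy. destruct hy as [he hy].
  exists (exist _ (y, e) (conj he hy)). unfold F. simpl. rewrite d_self; auto.
- assert (H : p (fun n => forall i, In i l -> ~ F i (iterT T n x))).
  { clear hl. induction l as [|i0 l IH].
    - apply uf_all; [exact hp|]. intros n i1 [].
    - assert (hi : p (fun n => ~ F i0 (iterT T n x))).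
      { destruct i0 as [[z e] [he hz]]. unfold F; simpl.
        destruct (uf_ult _ hp (fun n => d (iterT T n x) z < e)) as [h|h]; [contradiction|].
        refine (uf_mono _ hp _ _ _ h). intros n hn'. rewrite d_sym; auto. }
      refine (uf_mono _ hp _ _ _ (uf_int _ hp _ _ hi IH)).
      intros n [h1 h2] j [<-|hj]; [exact h1|exact (h2 j hj)]. }
  destruct (uf_ne _ hp _ H) as [n hn0].
  destruct (hl (iterT T n x)) as [i [hi1 hi2]]. apply (hn0 i hi1 hi2).
Qed.

Lemma lim_unique X (d : X -> X -> R) T p x z z' : is_metric d -> is_uf p ->
  Lim X d T p x z -> Lim X d T p x z' -> z = z'.
Proof.
intros hm hp h1 h2. apply (proj1 hm). apply NNPP. intro hne.
pose proof (d_nonneg X d z z' hm).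
assert (hpos : 0 < d z z' / 2) by lra.
destruct (uf_ne _ hp _ (uf_int _ hp _ _ (h1 _ hpos) (h2 _ hpos))) as [n [a b]].
pose proof (d_tri X d z (iterT T n x) z' hm). rewrite (d_sym X d z (iterT T n x)) in H0; auto. lra.
Qed.

Lemma lim_comp X (d : X -> X -> R) T p q x z w : is_metric d -> d_continuous d T ->
  is_uf p -> is_uf q -> Lim X d T q x z -> Lim X d T p z w -> Lim X d T (star p q) x w.
Proof.
intros hm hT hp hq h1 h2 e he. unfold star.
assert (he2 : 0 < e / 2) by lra.
refine (uf_mono _ hp _ _ _ (h2 _ he2)). intros n hn. simpl in hn.
destruct (iter_cont X d T hT n z (e/2) he2) as [eta [heta hc]].
refine (uf_mono _ hq _ _ _ (h1 _ heta)). intros m hm'. simpl in hm'.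
rewrite iterT_add. rewrite d_sym in hm'; auto.
pose proof (hc _ hm'). rewrite d_sym in H; auto.
pose proof (d_tri X d (iterT T n (iterT T m x)) (iterT T n z) w hm). lra.
Qed.

Lemma lim_shift X (d : X -> X -> R) T p x z m : is_metric d -> d_continuous d T ->
  is_uf p -> Lim X d T p x z -> Lim X d T p (iterT T m x) (iterT T m z).
Proof.
intros hm hT hp h e he.
destruct (iter_cont X d T hT m z e he) as [eta [heta hc]].
refine (uf_mono _ hp _ _ _ (h _ heta)). intros n hn. simpl in hn.
rewrite <- iterT_add, Nat.add_comm, iterT_add.
rewrite d_sym; auto. apply hc. rewrite d_sym; auto.
Qed.
Lemma Fip_mono (A B : nat -> Prop) : F_ip A -> (forall n, A n -> B n) -> F_ip B.
Proof. intros [p [h1 h2]] h. exists p. split; auto. Qed.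

Lemma sp_of_idem X (d : X -> X -> R) T u z w : is_metric d -> d_compact d -> d_continuous d T ->
  is_uf u -> nonpr u -> star u u = u -> Lim X d T u z w -> strongly_proximal d T z w.
Proof.
intros hm hc hT uu nu Hid hzw.
destruct (lim_exists X d T u w hm hc uu) as [w' hw'].
assert (E : w' = w).
{ apply (lim_unique X d T u z); auto. rewrite <- Hid. apply (lim_comp X d T u u z w w'); auto. }
subst w'.
assert (Hk : forall k : nat, exists n, (k <= n)%nat /\ d (iterT T n z) w < / (INR k + 1) /\ d (iterT T n w) w < / (INR k + 1)).
{ intro k. assert (hk : 0 < / (INR k + 1)). { apply Rinv_0_lt_compat. pose proof (pos_INR k). lra. }
  apply (uf_ne _ uu). apply uf_int; auto. apply uf_int; auto. }
set (nk := fun k => proj1_sig (constructive_indefinite_description _ (Hk k))).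
assert (Hnk : forall k, (k <= nk k)%nat /\ d (iterT T (nk k) z) w < / (INR k + 1) /\ d (iterT T (nk k) w) w < / (INR k + 1)).
{ intro k. exact (proj2_sig (constructive_indefinite_description _ (Hk k))). }
assert (Hsmall : forall e, 0 < e -> exists k0, forall k, (k0 <= k)%nat -> / (INR k + 1) < e).
{ intros e he. destruct (archimed_cor1 e he) as [N [hN1 hN2]]. exists N. intros k hk.
  apply Rle_lt_trans with (/ INR N); auto. apply Rinv_le_contravar. apply lt_0_INR; lia.
  pose proof (le_INR _ _ hk). lra. }
exists nk. split; [|split].
- intros K. exists K. intros k hk. pose proof (proj1 (Hnk k)). lia.
- intros e he. destruct (Hsmall e he) as [k0 hk0]. exists k0. intros k hk.
  pose proof (hk0 k hk). pose proof (proj1 (proj2 (Hnk k))). simpl. lra.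
- intros e he. destruct (Hsmall e he) as [k0 hk0]. exists k0. intros k hk.
  pose proof (hk0 k hk). pose proof (proj2 (proj2 (Hnk k))). simpl. lra.
Qed.

Definition FSm (p : nat -> nat) (m n : nat) : Prop :=
  exists alpha, alpha <> nil /\ NoDup alpha /\ (forall i, In i alpha -> (m <= i)%nat) /\ n = fsum p alpha.

Lemma fsum_app p a b : fsum p (a ++ b) = (fsum p a + fsum p b)%nat.
Proof. induction a as [|x a IH]; simpl; auto. rewrite IH. lia. Qed.

Lemma fsum_len p a : (forall i, (1 <= p i)%nat) -> (length a <= fsum p a)%nat.
Proof. intro h. induction a as [|x a IH]; simpl; auto. specialize (h x). lia. Qed.

Lemma FSm_mono p m M n : (m <= M)%nat -> FSm p M n -> FSm p m n.
Proof. intros h [al [h1 [h2 [h3 h4]]]]. exists al. repeat split; auto. intros i hi. specialize (h3 i hi). lia. Qed.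

Lemma FSm_shift p m n : FSm p m n -> exists M, forall j, FSm p M j -> FSm p m (n + j).
Proof.
intros [al [h1 [h2 [h3 ->]]]]. exists (S (list_max al) + m)%nat.
intros j [be [g1 [g2 [g3 ->]]]]. exists (al ++ be). split; [|split; [|split]].
- destruct al; simpl; congruence.
- apply NoDup_app; auto. intros a ha hb. specialize (g3 a hb).
  pose proof (proj1 (list_max_le al (list_max al)) (le_n _)) as hF. rewrite Forall_forall in hF.
  specialize (hF a ha). lia.
- intros i hi. apply in_app_or in hi. destruct hi as [hi|hi]; auto. specialize (g3 i hi). lia.
- rewrite fsum_app. reflexivity.
Qed.
Theorem proposition4p15 (X : Type) (d : X -> X -> R) (T : X -> X)
  (hTDS : TDS d T) (hmin : minimal d T) :
  strongly_Fip_sensitive d T <->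
  exists delta, 0 < delta /\
    forall U : X -> Prop, d_open d U -> (exists u, U u) ->
      exists x y, U x /\ d x y > delta /\ strongly_proximal d T x y.
Proof.
destruct hTDS as [hm [hc [hT _]]].
split.
- intros [delta [hd hS]]. exists (delta / 4). split; [lra|].
  intros U hU [u0 hu0].
  destruct (hU u0 hu0) as [eps [heps hball]].
  set (r := Rmin eps (delta / 8)).
  assert (hr : 0 < r) by (apply Rmin_glb_lt; lra).
  assert (hr1 : r <= eps) by apply Rmin_l.
  assert (hr2 : r <= delta / 8) by apply Rmin_r.
  destruct (hS (fun z => d u0 z < r) (ball_open X d u0 r hm)) as [x [y [hx [hy [p [hp1 hp2]]]]]].
  { exists u0. rewrite d_self; auto. }
  set (F0 := fun A : sset => (exists k, A = fun n => (k <= n)%nat) \/ (exists m, A = FSm p m)).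
  destruct (ellis F0) as [u [[uu hu] Hid]].
  + apply uf_exists. intros L HL.
    assert (HMK : exists M K, forall B, In B L -> forall n, FSm p M n -> (K <= n)%nat -> B n).
    { induction L as [|B0 L IH].
      - exists 0%nat, 0%nat. intros B [].
      - destruct IH as [M [K IH]]. { intros; apply HL; simpl; auto. }
        destruct (HL B0 (or_introl eq_refl)) as [[k ->]|[m ->]].
        + exists M, (Nat.max K k). intros B [<-|hB] n h1 h2. lia. apply (IH B hB); auto. lia.
        + exists (Nat.max M m), K. intros B [<-|hB] n h1 h2.
          * apply (FSm_mono p m (Nat.max M m)); auto. lia.
          * apply (IH B hB); auto. apply (FSm_mono p M (Nat.max M m)); auto. lia. }
    destruct HMK as [M [K HMK]].
    exists (fsum p (seq M (S K))). intros B hB. apply (HMK B hB).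
    * exists (seq M (S K)). split; [simpl; congruence|split; [apply seq_NoDup|split; [|reflexivity]]].
      intros i hi. apply in_seq in hi. lia.
    * pose proof (fsum_len p (seq M (S K)) hp1). rewrite length_seq in H. lia.
  + intros q1 q2 [h1 h2] [h3 h4]. split. apply star_uf; auto.
    intros A [[k ->]|[m ->]]; unfold star.
    * apply uf_all; auto. intros n. refine (uf_mono _ h3 _ _ _ (h4 _ (or_introl (ex_intro _ k eq_refl)))).
      simpl. intros j hj. lia.
    * refine (uf_mono _ h1 _ _ _ (h2 _ (or_intror (ex_intro _ m eq_refl)))).
      intros n hn. destruct (FSm_shift p m n hn) as [M hM].
      refine (uf_mono _ h3 _ _ _ (h4 _ (or_intror (ex_intro _ M eq_refl)))). exact hM.
  + assert (nu : nonpr u). { intro k. apply hu. left. exists k. reflexivity. }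
    assert (uD : u (fun n => d (iterT T n x) (iterT T n y) > delta)).
    { refine (uf_mono _ uu _ _ _ (hu _ (or_intror (ex_intro _ 0%nat eq_refl)))).
      intros n [al [g1 [g2 [g3 ->]]]]. apply hp2. exists al. auto. }
    destruct (lim_exists X d T u x hm hc uu) as [xu hxu].
    destruct (lim_exists X d T u y hm hc uu) as [yu hyu].
    assert (hdu : delta <= d xu yu).
    { destruct (Rle_lt_dec delta (d xu yu)) as [h|h]; auto. exfalso.
      assert (he : 0 < (delta - d xu yu) / 2) by lra.
      destruct (uf_ne _ uu _ (uf_int _ uu _ _ uD (uf_int _ uu _ _ (hxu _ he) (hyu _ he)))) as [n [a [b c]]].
      pose proof (d_tri X d (iterT T n x) xu (iterT T n y) hm).
      pose proof (d_tri X d xu yu (iterT T n y) hm).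
      rewrite (d_sym X d yu (iterT T n y)) in H0; auto. lra. }
    assert (hxy : d x y < delta / 4).
    { pose proof (d_tri X d x u0 y hm). rewrite (d_sym X d x u0) in H; auto. lra. }
    assert (h3 : d xu yu <= d x xu + d x y + d y yu).
    { pose proof (d_tri X d xu x yu hm). pose proof (d_tri X d x y yu hm).
      rewrite (d_sym X d xu x) in H; auto. lra. }
    destruct (Rlt_le_dec (delta / 4) (d x xu)) as [hcase|hcase].
    * exists x, xu. split; [apply hball; lra|split; [lra|]].
      apply (sp_of_idem X d T u); auto.
    * exists y, yu. split; [apply hball; lra|split; [lra|]].
      apply (sp_of_idem X d T u); auto.
- intros [delta [hd hP]]. exists (delta / 2). split; [lra|].
  intros U hU hne.
  destruct (hP U hU hne) as [x [y [hx [hxy [nk [hinf [hcx hcy]]]]]]].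
  set (eps := delta / 8).
  set (F0 := fun A : sset => (exists k, A = fun n => (k <= n)%nat) \/
      (exists e, 0 < e /\ A = fun n => d (iterT T n x) y < e) \/
      (exists e, 0 < e /\ A = fun n => d (iterT T n y) y < e)).
  assert (Hchar : forall r, is_uf r -> nonpr r -> Lim X d T r x y -> Lim X d T r y y -> hull F0 r).
  { intros r ru rn rx ry. split; auto. intros A [[k ->]|[[e [he ->]]|[e [he ->]]]]; auto. }
  destruct (ellis F0) as [u [[uu hu] Hid]].
  + apply uf_exists. intros L HL.
    assert (HMK : exists K e, 0 < e /\ forall B, In B L -> forall n, (K <= n)%nat ->
        d (iterT T n x) y < e -> d (iterT T n y) y < e -> B n).
    { induction L as [|B0 L IH].
      - exists 0%nat, 1. split; [lra|]. intros B [].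
      - destruct IH as [K [e [he IH]]]. { intros; apply HL; simpl; auto. }
        destruct (HL B0 (or_introl eq_refl)) as [[k ->]|[[e' [he' ->]]|[e' [he' ->]]]].
        + exists (Nat.max K k), e. split; auto. intros B [<-|hB] n h1 h2 h3. lia. apply (IH B hB); auto. lia.
        + exists K, (Rmin e e'). split. apply Rmin_glb_lt; auto.
          pose proof (Rmin_l e e'). pose proof (Rmin_r e e').
          intros B [<-|hB] n h1 h2 h3. lra. apply (IH B hB); auto; lra.
        + exists K, (Rmin e e'). split. apply Rmin_glb_lt; auto.
          pose proof (Rmin_l e e'). pose proof (Rmin_r e e').
          intros B [<-|hB] n h1 h2 h3. lra. apply (IH B hB); auto; lra. }
    destruct HMK as [K [e [he HMK]]].
    destruct (hcx e he) as [k1 hk1]. destruct (hcy e he) as [k2 hk2]. destruct (hinf K) as [k3 hk3].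
    set (k := Nat.max k1 (Nat.max k2 k3)).
    exists (nk k). intros B hB. apply (HMK B hB).
    * apply hk3. lia.
    * apply hk1. lia.
    * apply hk2. lia.
  + intros q1 q2 [h1 h2] [h3 h4]. apply Hchar.
    * apply star_uf; auto.
    * apply nonpr_star; auto. intro k. apply h4. left. exists k; reflexivity.
    * apply (lim_comp X d T q1 q2 x y y); auto.
      -- intros e he. apply h4. right; left. exists e; auto.
      -- intros e he. apply h2. right; right. exists e; auto.
    * apply (lim_comp X d T q1 q2 y y y); auto.
      -- intros e he. apply h4. right; right. exists e; auto.
      -- intros e he. apply h2. right; right. exists e; auto.
  + assert (nu : nonpr u). { intro k. apply hu. left. exists k. reflexivity. }
    assert (ux : Lim X d T u x y). { intros e he. apply hu. right; left. exists e; auto. }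
    assert (uy : Lim X d T u y y). { intros e he. apply hu. right; right. exists e; auto. }
    assert (heps : 0 < eps) by (unfold eps; lra).
    destruct (hmin y (fun z => U z /\ d x z < eps)) as [b [[m ->] [hb1 hb2]]].
    { intros z [hz1 hz2]. destruct (hU z hz1) as [e1 [he1 g1]].
      destruct (ball_open X d x eps hm z hz2) as [e2 [he2 g2]].
      exists (Rmin e1 e2). split. apply Rmin_glb_lt; auto.
      pose proof (Rmin_l e1 e2). pose proof (Rmin_r e1 e2).
      intros w hw. split; [apply g1|apply g2]; lra. }
    { exists x. split; auto. rewrite d_self; auto. }
    set (b := iterT T m y) in *.
    assert (ub : Lim X d T u b b) by (apply lim_shift; auto).
    exists x, b. split; auto. split; auto.
    apply (Fip_mono (fun n => d (iterT T n x) y < eps /\ d (iterT T n b) b < eps)).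
    * apply (ip_of_idem u); auto. apply uf_int; auto.
    * intros n [h1 h2].
      pose proof (d_tri X d x b y hm). rewrite (d_sym X d b y) in H; auto.
      pose proof (d_tri X d y (iterT T n x) b hm).
      pose proof (d_tri X d (iterT T n x) (iterT T n b) b hm).
      rewrite (d_sym X d y (iterT T n x)) in H0; auto.
      unfold eps in *. lra.
Qed.
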